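(* Let $T>0$, $0<\eta<T$, $0<\alpha <\frac{2T}{\eta ^{2}}$ and $0\leq\beta < \frac{2T-\alpha \eta ^{2}}{\alpha \eta ^{2}-2\eta +2T}$. If $y\in C([0,T],[0,\infty))$, then the unique solution $u$ of \[ u''(t)+y(t)=0,\ t\in(0,T),\qquad u(0)=\beta u(\eta),\quad u(T)=\alpha\int_0^\eta u(s)\,ds \] satisfies \[ \min_{t\in [\eta,T]}u(t)\geq \gamma \|u\|,\qquad \|u\|=\max_{t\in[0,T]}|u(t)|, \] where \[ \gamma:=\min\left\{\frac{\eta}{T}, \frac{\alpha(\beta+1)\eta^{2}}{2T}, \frac{\alpha(\beta+1)\eta(T-\eta)}{2T-\alpha(\beta+1)\eta^{2}}\right\}\in(0,1). \]
   Context: A solution is a function $u\in C^2([0,T])$ satisfying the differential equation on $(0,T)$ and the two boundary conditions; under the stated hypotheses this problem has a unique solution. *)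

(* Defs.v *)
From Stdlib Require Import Reals.
From Coquelicot Require Import Coquelicot.
Open Scope R_scope.

Definition cont_on (a b : R) (f : R -> R) : Prop :=
  forall t, a <= t <= b ->
    filterlim f (within (fun x => a <= x <= b) (locally t)) (locally (f t)).

(* u ∈ C^2([a,b]) with u' = u1, u'' = u2: u is twice differentiable on (a,b)
   and u, u', u'' extend continuously to [a,b]
   (equivalently, one-sided derivatives exist at the endpoints). *)
Definition C2_on (a b : R) (u u1 u2 : R -> R) : Prop :=
  (forall t, a < t < b -> is_derive u t (u1 t) /\ is_derive u1 t (u2 t)) /\
  cont_on a b u /\ cont_on a b u1 /\ cont_on a b u2.

Definition gamma (T eta alpha beta : R) : R :=
  Rmin (eta / T)
    (Rmin (alpha * (beta + 1) * eta ^ 2 / (2 * T))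
          (alpha * (beta + 1) * eta * (T - eta) / (2 * T - alpha * (beta + 1) * eta ^ 2))).

(* Main.v *)
Require Import Defs.
From Stdlib Require Import Reals Lra Psatz.
From Coquelicot Require Import Coquelicot.
Open Scope R_scope.

Lemma mvt_open (f df : R -> R) (a b : R) : a < b ->
  (forall x, a < x < b -> is_derive f x (df x)) ->
  (forall x, a <= x <= b -> continuity_pt f x) ->
  exists c, a < c < b /\ f b - f a = df c * (b - a).
Proof.
  intros Hab Hd Hc.
  pose (pr1 := fun c (P : a < c < b) =>
     exist (fun l => derivable_pt_lim f c l) (df c) (proj1 (is_derive_Reals f c (df c)) (Hd c P))).
  pose (pr2 := fun c (P : a < c < b) => derivable_pt_id c).
  destruct (MVT f id a b pr1 pr2 Hab Hc (fun c _ => continuity_pt_id c)) as [c [P HP]].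
  exists c; split; [exact P|].
  unfold pr1, pr2 in HP. rewrite derive_pt_id in HP. simpl in HP. unfold id in HP. lra.
Qed.

Definition clamp (T x : R) := Rmax 0 (Rmin T x).

Lemma clamp_in T x : 0 <= T -> 0 <= clamp T x <= T.
Proof. intros; unfold clamp, Rmax, Rmin; repeat destruct Rle_dec; lra. Qed.

Lemma clamp_id T x : 0 <= x <= T -> clamp T x = x.
Proof. intros; unfold clamp, Rmax, Rmin; repeat destruct Rle_dec; lra. Qed.

Lemma clamp_lip T x y : Rabs (clamp T y - clamp T x) <= Rabs (y - x).
Proof.
  unfold clamp, Rmax, Rmin; repeat destruct Rle_dec;
  unfold Rabs; repeat destruct Rcase_abs; lra.
Qed.

Lemma clamp_lim T x : 0 <= T ->
  filterlim (clamp T) (locally x) (within (fun z => 0 <= z <= T) (locally (clamp T x))).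
Proof.
  intros HT P [eps HP]. exists eps. intros y Hy.
  apply HP.
  - change (Rabs (clamp T y - clamp T x) < eps).
    eapply Rle_lt_trans; [apply clamp_lip|]. exact Hy.
  - apply clamp_in; lra.
Qed.

Lemma clamp_cont T (u : R -> R) x : 0 <= T -> cont_on 0 T u ->
  continuous (fun z => u (clamp T z)) x.
Proof.
  intros HT Hc. unfold continuous.
  eapply filterlim_comp; [apply clamp_lim; exact HT|].
  apply Hc. apply clamp_in; lra.
Qed.
Lemma U_deriv T (u u1 : R -> R) x : 0 < x < T -> is_derive u x (u1 x) ->
  is_derive (fun z => u (clamp T z)) x (u1 x).
Proof.
  intros Hx Hd. eapply is_derive_ext_loc; [|exact Hd].
  assert (Hp : 0 < Rmin x (T - x)) by (apply Rmin_pos; lra).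
  exists (mkposreal _ Hp). intros y Hy. change (Rabs (y - x) < Rmin x (T - x)) in Hy.
  assert (Rmin x (T-x) <= x) by apply Rmin_l. assert (Rmin x (T-x) <= T - x) by apply Rmin_r.
  rewrite clamp_id; [reflexivity|]. apply Rabs_def2 in Hy. lra.
Qed.

Lemma concave T (u u1 u2 y : R -> R) :
  0 < T -> C2_on 0 T u u1 u2 -> (forall t, 0 <= t <= T -> 0 <= y t) ->
  (forall t, 0 < t < T -> u2 t + y t = 0) ->
  forall x z w, 0 <= x -> x < z -> z < w -> w <= T ->
  (w - z) * u x + (z - x) * u w <= (w - x) * u z.
Proof.
  intros HT [Hd [Hc _]] Hy Hu x z w H1 H2 H3 H4.
  set (U := fun z => u (clamp T z)).
  assert (HUc : forall p, continuity_pt U p).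
  { intro p. apply continuity_pt_filterlim. apply clamp_cont; [lra|exact Hc]. }
  assert (HUd : forall p, 0 < p < T -> is_derive U p (u1 p)).
  { intros p Hp. apply U_deriv; [exact Hp|]. apply (Hd p Hp). }
  destruct (mvt_open U u1 x z H2) as [c1 [Hc1 E1]].
  { intros p Hp; apply HUd; lra. } { intros; apply HUc. }
  destruct (mvt_open U u1 z w H3) as [c2 [Hc2 E2]].
  { intros p Hp; apply HUd; lra. } { intros; apply HUc. }
  destruct (mvt_open u1 u2 c1 c2) as [c [Hc3 E3]].
  { lra. } { intros p Hp; apply Hd; lra. }
  { intros p Hp. apply derivable_continuous_pt. exists (u2 p).
    apply is_derive_Reals; apply Hd; lra. }
  assert (u2 c <= 0). { assert (0 <= y c) by (apply Hy; lra). assert (u2 c + y c = 0) by (apply Hu; lra). lra. }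
  unfold U in E1, E2. rewrite !clamp_id in E1, E2 by lra.
  assert (u1 c2 <= u1 c1) by nra.
  assert (0 <= (w - z) * (z - x) * (u1 c1 - u1 c2)).
  { apply Rmult_le_pos; [apply Rmult_le_pos|]; lra. }
  assert (u x = u z - u1 c1 * (z - x)) by lra.
  assert (u w = u z + u1 c2 * (w - z)) by lra.
  rewrite H6, H7. nra.
Qed.

Lemma int_bound T eta (u u1 u2 y : R -> R) :
  0 < T -> 0 < eta -> eta < T -> C2_on 0 T u u1 u2 -> (forall t, 0 <= t <= T -> 0 <= y t) ->
  (forall t, 0 < t < T -> u2 t + y t = 0) ->
  eta * (u 0 + u eta) / 2 <= RInt u 0 eta.
Proof.
  intros HT He HeT HC Hy Hu.
  pose proof (concave T u u1 u2 y HT HC Hy Hu) as Hcc.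
  destruct HC as [Hd [Hc _]].
  set (a := u 0). set (b := u eta).
  set (L := fun x => a + (b - a) * x / eta).
  set (F := fun x => a * x + (b - a) * (x * x) / (2 * eta)).
  assert (HL : is_RInt L 0 eta (eta * (a + b) / 2)).
  { replace (eta * (a + b) / 2) with (minus (F eta) (F 0)).
    2:{ unfold F, minus, plus, opp; simpl. field. lra. }
    apply (is_RInt_derive (V:=R_CompleteNormedModule) F L).
    - intros x _. unfold F, L. auto_derive; [exact I|]. field. lra.
    - intros x _. unfold L. apply continuity_pt_filterlim.
      apply derivable_continuous_pt. unfold derivable_pt, derivable_pt_abs.
      exists ((b - a) / eta). apply is_derive_Reals. auto_derive; [exact I|]. field. lra. }
  rewrite <- (is_RInt_unique (V:=R_CompleteNormedModule) _ _ _ _ HL).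
  rewrite (RInt_ext u (fun z => u (clamp T z))).
  2:{ intros x Hx. rewrite Rmin_left in Hx by lra. rewrite Rmax_right in Hx by lra.
      rewrite clamp_id; [reflexivity|lra]. }
  apply RInt_le.
  - lra.
  - eexists; exact HL.
  - apply (ex_RInt_continuous (V:=R_CompleteNormedModule)). intros z _. apply clamp_cont; [lra|exact Hc].
  - intros x Hx. rewrite clamp_id by lra. unfold L.
    pose proof (Hcc 0 x eta ltac:(lra) ltac:(lra) ltac:(lra) ltac:(lra)).
    fold a b in H.
    apply (Rmult_le_reg_r eta); [lra|].
    replace ((a + (b - a) * x / eta) * eta) with ((eta - x) * a + (x - 0) * b) by (field; lra).
    lra.
Qed.

Lemma le_div x p q : 0 < q -> x <= p / q -> x * q <= p.
Proof. intros Hq H. apply (Rmult_le_compat_r q) in H; [|lra].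
  replace (p / q * q) with p in H by (field; lra). exact H. Qed.

Theorem lemma2p4 (T eta alpha beta : R) (y u u1 u2 : R -> R) :
  0 < T -> 0 < eta -> eta < T ->
  0 < alpha -> alpha < 2 * T / eta ^ 2 ->
  0 <= beta ->
  beta < (2 * T - alpha * eta ^ 2) / (alpha * eta ^ 2 - 2 * eta + 2 * T) ->
  cont_on 0 T y -> (forall t, 0 <= t <= T -> 0 <= y t) ->
  C2_on 0 T u u1 u2 ->
  (forall t, 0 < t < T -> u2 t + y t = 0) ->
  u 0 = beta * u eta ->
  u T = alpha * RInt u 0 eta ->
  0 < gamma T eta alpha beta < 1 /\
  (forall t s, eta <= t <= T -> 0 <= s <= T ->
     gamma T eta alpha beta * Rabs (u s) <= u t).
Proof.
  intros HT He HeT Ha Ha2 Hb Hb2 _ Hy HC Hu Hbc1 Hbc2.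
  pose proof (concave T u u1 u2 y HT HC Hy Hu) as Hcc.
  pose proof (int_bound T eta u u1 u2 y HT He HeT HC Hy Hu) as HI.
  set (a := u 0) in *. set (b := u eta) in *. set (c := u T) in *.
  set (m := alpha * (beta + 1) * eta / 2).
  assert (Hae : alpha * eta ^ 2 < 2 * T).
  { apply (Rmult_lt_compat_r (eta ^ 2)) in Ha2; [|nra].
    replace (2 * T / eta ^ 2 * eta ^ 2) with (2 * T) in Ha2 by (field; lra). lra. }
  assert (HD : 0 < alpha * eta ^ 2 - 2 * eta + 2 * T) by nra.
  assert (Hb3 : beta * (alpha * eta ^ 2 - 2 * eta + 2 * T) < 2 * T - alpha * eta ^ 2).
  { apply (Rmult_lt_compat_r _ _ _ HD) in Hb2.
    replace ((2 * T - alpha * eta ^ 2) / (alpha * eta ^ 2 - 2 * eta + 2 * T) *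
             (alpha * eta ^ 2 - 2 * eta + 2 * T)) with (2 * T - alpha * eta ^ 2) in Hb2
      by (field; lra). exact Hb2. }
  assert (Hk : 0 < T - (T - eta) * beta - eta * m).
  { unfold m. nra. }
  assert (Hm : 0 < m). { unfold m. apply Rmult_lt_0_compat; [|lra].
    apply Rmult_lt_0_compat; [|lra]. apply Rmult_lt_0_compat; lra. }
  assert (HTm : 0 < T - m * eta).
  { assert (0 <= (T-eta)*beta) by (apply Rmult_le_pos; lra). lra. }
  assert (H1 : T * b >= (T - eta) * a + eta * c).
  { pose proof (Hcc 0 eta T ltac:(lra) He HeT ltac:(lra)). fold a b c in H. lra. }
  assert (H2 : c >= m * b).
  { rewrite Hbc2. unfold m. rewrite Hbc1 in HI.
    apply Rle_ge. apply Rle_trans with (alpha * (eta * (beta * b + b) / 2)).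
    - nra.
    - apply Rmult_le_compat_l; lra. }
  assert (Hb0 : 0 <= b).
  { destruct (Rle_or_lt 0 b) as [h|h]; [exact h|].
    exfalso. rewrite Hbc1 in H1. nra. }
  assert (Hc0 : 0 <= c) by nra.
  assert (Ha0 : 0 <= a) by (rewrite Hbc1; nra).
  assert (Hpos : forall s, 0 <= s <= T -> 0 <= u s).
  { intros s Hs. destruct (Req_dec s 0) as [->|h0]; [exact Ha0|].
    destruct (Req_dec s T) as [->|h1]; [exact Hc0|].
    pose proof (Hcc 0 s T ltac:(lra) ltac:(lra) ltac:(lra) ltac:(lra)).
    fold a c in H. nra. }
  set (g := gamma T eta alpha beta).
  assert (G1 : g <= eta / T) by apply Rmin_l.
  assert (G2 : g <= alpha * (beta + 1) * eta ^ 2 / (2 * T)).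
  { eapply Rle_trans; [apply Rmin_r|apply Rmin_l]. }
  assert (G3 : g <= alpha * (beta + 1) * eta * (T - eta) / (2 * T - alpha * (beta + 1) * eta ^ 2)).
  { eapply Rle_trans; [apply Rmin_r|apply Rmin_r]. }
  assert (Hp1 : alpha * (beta + 1) * eta ^ 2 = 2 * (m * eta)) by (unfold m; field).
  assert (Hp2 : alpha * (beta + 1) * eta * (T - eta) = 2 * (m * (T - eta))) by (unfold m; field).
  assert (Gp : 0 < g).
  { unfold g, gamma. rewrite Hp1, Hp2. repeat apply Rmin_pos.
    - apply Rdiv_lt_0_compat; lra.
    - apply Rdiv_lt_0_compat; nra.
    - apply Rdiv_lt_0_compat; [|nra].
      assert (0 < m * (T - eta)) by (apply Rmult_lt_0_compat; lra). lra. }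
  rewrite Hp1 in G2, G3. rewrite Hp2 in G3.
  apply le_div in G1; [|lra].
  apply le_div in G2; [|lra].
  apply le_div in G3; [|lra].
  assert (G1' : g * T <= eta) by exact G1.
  assert (G2' : g * T <= m * eta) by lra.
  assert (G3' : g * (T - m * eta) <= m * (T - eta)) by lra.
  assert (Glt : g < 1).
  { apply (Rmult_lt_reg_r T); [lra|]. lra. }
  split; [lra|].
  intros t s Ht Hs.
  rewrite Rabs_right by (apply Rle_ge, Hpos; lra).
  assert (Hus := Hpos s Hs).
  assert (Hmin : forall v, v <= b -> v <= c -> v <= u t).
  { intros v hb hc.
    destruct (Req_dec t eta) as [->|h0]; [exact hb|].
    destruct (Req_dec t T) as [->|h1]; [exact hc|].
    pose proof (Hcc eta t T ltac:(lra) ltac:(lra) ltac:(lra) ltac:(lra)).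
    fold b c in H. nra. }
  apply Hmin.
  - destruct (Rle_or_lt eta s) as [hs|hs].
    + assert (eta * u s <= T * b).
      { destruct (Req_dec s eta) as [->|h0]; [fold b; nra|].
        pose proof (Hcc 0 eta s ltac:(lra) ltac:(lra) ltac:(lra) ltac:(lra)).
        fold a b in H. nra. }
      nra.
    + pose proof (Hcc s eta T ltac:(lra) hs HeT ltac:(lra)). fold b c in H.
      destruct (Rle_or_lt b c) as [hbc|hbc].
      * assert (u s <= b) by nra. nra.
      * assert ((T - eta) * u s <= (T - m * eta) * b) by nra.
        assert (g * (T - m * eta) <= T - eta).
        { destruct (Rle_or_lt m 1); nra. }
        nra.
  - destruct (Rle_or_lt eta s) as [hs|hs].
    + assert (eta * u s <= T * b).
      { destruct (Req_dec s eta) as [->|h0]; [fold b; nra|].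
        pose proof (Hcc 0 eta s ltac:(lra) ltac:(lra) ltac:(lra) ltac:(lra)).
        fold a b in H. nra. }
      nra.
    + pose proof (Hcc s eta T ltac:(lra) hs HeT ltac:(lra)). fold b c in H.
      destruct (Rle_or_lt b c) as [hbc|hbc].
      * assert (u s <= b) by nra. nra.
      * assert ((T - eta) * u s <= (T - m * eta) * b) by nra.
        nra.
Qed.
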